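(* For all integers $n, k \geq 1$ with $n \geq k$, $$\sum_{i=k}^{n} \frac{s(n-1,i-1)\, S(i,k)}{i} = \frac{1}{n}\binom{n}{k} B_{n-k}^*.$$
   Context: For $n \geq 0$, $X^{\underline{n}} := X(X-1)\cdots(X-n+1)$ ($X^{\underline{0}}=1$). The (signed) Stirling numbers of the first kind $s(n,k)$ are defined by $X^{\underline{n}} = \sum_{k=0}^{n} s(n,k) X^k$, and the Stirling numbers of the second kind $S(n,k)$ by $X^n = \sum_{k=0}^{n} S(n,k) X^{\underline{k}}$ (for all $n\ge 0$), with $s(n,k)=S(n,k)=0$ when $n<k$. The Bernoulli numbers of the second kind $B_n^*$ are defined by $\frac{t}{\log(1+t)} = \sum_{n \ge 0} B_n^* \frac{t^n}{n!}$. *)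

(* Defs.v *)
From mathcomp Require Import all_boot all_order all_algebra.
Set Implicit Arguments. Unset Strict Implicit. Unset Printing Implicit Defensive.
Import Order.TTheory GRing.Theory Num.Theory.
Local Open Scope ring_scope.

Definition falling (n : nat) : {poly int} := \prod_(i < n) ('X - (i%:Z)%:P).

(* Signed Stirling numbers of the first kind: X^{(n)} = sum_k s(n,k) X^k. *)
Definition stir1 (n k : nat) : int := (falling n)`_k.

(* Stirling numbers of the second kind, via the standard recurrence
   S(0,0)=1, S(0,k+1)=0, S(n+1,0)=0, S(n+1,k+1)=S(n,k)+(k+1)S(n,k+1),
   which is equivalent to X^n = sum_k S(n,k) X^{(k)}. *)
Fixpoint stir2 (n k : nat) : nat :=
  match n, k with
  | 0, 0 => 1
  | 0, _.+1 => 0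
  | _.+1, 0 => 0
  | m.+1, j.+1 => (stir2 m j + j.+1 * stir2 m j.+1)%N
  end.

(* log(1+t)/t = sum_{m>=0} (-1)^m t^m/(m+1); its reciprocal t/log(1+t) has
   coefficients b_n = B_n^*/n!, determined by
   sum_{j=0}^{n} b_j (-1)^(n-j)/(n-j+1) = [n = 0]. *)
Fixpoint bseq (n : nat) : seq rat :=
  match n with
  | 0 => [:: 1]
  | m.+1 => let s := bseq m in
      rcons s (- \sum_(j < m.+1) s`_j * (-1) ^+ (m.+1 - j) / (m.+2 - j)%:R)
  end.

Definition bstar (n : nat) : rat := (n`!)%:R * (bseq n)`_n.

(* Main.v *)
Require Import Defs.
From mathcomp Require Import all_boot all_order all_algebra.
Import Order.TTheory GRing.Theory Num.Theory.
Local Open Scope ring_scope.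

Lemma fallingS N : falling N.+1 = falling N * ('X - (N%:Z)%:P).
Proof. by rewrite /falling big_ord_recr. Qed.

Lemma size_falling N : size (falling N) = N.+1.
Proof.
elim: N => [|N IH]; first by rewrite /falling big_ord0 size_poly1.
rewrite fallingS size_mul ?polyXsubC_eq0 // ?size_XsubC ?IH ?addn2 //.
by rewrite -size_poly_eq0 IH.
Qed.

Lemma stir1_big N i : (N < i)%N -> stir1 N i = 0.
Proof. by move=> h; rewrite /stir1 nth_default // size_falling. Qed.

Lemma stir1S N i : stir1 N.+1 i =
  (if i is i'.+1 then stir1 N i' else 0) - N%:Z * stir1 N i.
Proof.
rewrite /stir1 fallingS mulrBr coefB coefMX coefMC mulrC.
by case: i.
Qed.

Lemma stir10 i : stir1 0 i = (i == 0)%:R.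
Proof. by rewrite /stir1 /falling big_ord0 coef1. Qed.

Lemma stir2_small i K : (i < K)%N -> stir2 i K = 0%N.
Proof.
elim: i K => [|i IH] [|K] //= h.
by rewrite !IH // ?muln0 // ltnS ltnW.
Qed.

From mathcomp Require Import ring.
Arguments stir2 : simpl nomatch.
Lemma bump0n i : bump 0 i = i.+1. Proof. by []. Qed.
Lemma orth N : forall K M, (N < M)%N ->
  \sum_(i < M) (stir1 N i)%:~R * (stir2 i K)%:R = ((N == K)%:R : rat).
Proof.
elim: N => [|N IH] K [|M] //= hM.
  rewrite big_ord_recl stir10 /= big1 ?addr0; last first.
    by move=> i _; rewrite stir10 /= mul0r.
  by case: K => //= K; rewrite mulr0.
have T0 := IH K M.+1 (ltnW hM).
rewrite big_ord_recl /= in T0.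
rewrite (eq_bigr (fun i : 'I_M => (stir1 N i.+1)%:~R * (stir2 i.+1 K)%:R)) in T0; last by move=> i _; rewrite bump0n.
have E : \sum_(i < M.+1) (stir1 N.+1 i)%:~R * (stir2 i K)%:R =
   \sum_(i < M) (stir1 N i)%:~R * (stir2 i.+1 K)%:R - N%:R *
   ((stir1 N 0)%:~R * (stir2 0 K)%:R + \sum_(i<M) (stir1 N i.+1)%:~R * (stir2 i.+1 K)%:R :> rat).
  rewrite big_ord_recl /=.
  under eq_bigr => i _ do rewrite bump0n stir1S /= intrB intrM mulrBl -[_ * _ * _]mulrA.
  rewrite sumrB -(@mulr_sumr rat) stir1S /= sub0r intrN intrM.
  rewrite (_ : (N%:Z)%:~R = N%:R :> rat) //. 
  ring.
rewrite E T0; clear E T0.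
case: K => [|K].
  rewrite big1; last by move=> i _; rewrite /= mulr0.
  by case: N {IH hM} => [|N]; rewrite /= ?mulr0 ?mul0r subrr.
rewrite /=.
under eq_bigr => i _ do rewrite natrD natrM mulrDr.
rewrite big_split /=.
under [X in _ + X - _]eq_bigr => i _ do rewrite mulrCA.
rewrite -(@mulr_sumr rat) (IH _ _ hM) (IH _ _ hM) eqSS.
case: (eqVneq N K.+1) => [->|hne] /=.
  by rewrite eqn_leq ltnn /= mulr1 add0r subrr.
by rewrite !mulr0 addr0 subr0.
Qed.

Definition cc (N j : nat) : int := (-1) ^+ j * (j`!)%:R * ('C(N.+1, j.+1))%:R.

Lemma cc_rec N j : cc N.+1 j.+1 = cc N j.+1 - cc N j * (j.+1)%:R.
Proof.
rewrite /cc binS factS natrD natrM exprS; ring.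
Qed.

Lemma fallX r j : falling r * ('X - ((r + j)%N%:Z)%:P) = falling r.+1 - (j%:Z) *: falling r.
Proof.
rewrite fallingS PoszD polyCD opprD addrA mulrDr -mul_polyC mulrN.
by rewrite [_%:P * falling r]mulrC.
Qed.

Lemma dfall N : (falling N.+1)^`() = \sum_(j < N.+1) cc N j *: falling (N - j).
Proof.
elim: N => [|N IH].
  rewrite big_ord1 fallingS /falling big_ord0 mul1r derivXsubC /cc /= !scale1r.
  by [].
rewrite fallingS derivM derivXsubC mulr1 IH mulr_suml.
have E : forall j : 'I_N.+1, cc N j *: falling (N - j) * ('X - (N.+1%:Z)%:P) =
   cc N j *: falling (N - j).+1 - (cc N j * (j.+1)%:R) *: falling (N - j).
  move=> j; rewrite -scalerAl.
  rewrite (_ : (N.+1%:Z) = ((N - j) + j.+1)%N%:Z); last by rewrite addnS subnK // -ltnS.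
  by rewrite fallX scalerBr scalerA -natz.
rewrite (eq_bigr _ (fun j _ => E j)) sumrB.
rewrite [in RHS]big_ord_recl /=.
under [in RHS]eq_bigr => j _ do rewrite /bump /= add1n subSS cc_rec scalerBl.
rewrite sumrB addrAC addrA; congr (_ - _).
rewrite big_ord_recl big_ord_recr /=.
have -> : cc N N.+1 = 0 by rewrite /cc bin_small ?mulr0.
rewrite scale0r addr0 subn0.
under eq_bigr => i _ do rewrite bump0n subnSK ?ltn_ord //.
rewrite addrAC; congr (_ + _).
rewrite -{2}(scale1r (falling N.+1)) -scalerDl; congr (_ *: _).
by rewrite /cc /= !bin1 !mul1r -[N.+2]addn1 natrD.
Qed.

Lemma L2int m i : (0 < i)%N ->
  stir1 m.+1 i *+ i = \sum_(j < m.+1) cc m j * stir1 (m - j) i.-1.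
Proof.
move=> hi.
have := congr1 (fun p : {poly int} => p`_i.-1) (dfall m).
rewrite /= coef_deriv prednK // coef_sum => ->.
by apply: eq_bigr => j _; rewrite coefZ.
Qed.

Lemma L2q m i : (0 < i)%N ->
  \sum_(j < m.+1) ((-1)^+j / (j.+1)%:R) * ((stir1 (m - j) i.-1)%:~R / ((m-j)`!)%:R)
  = (i%:R * (stir1 m.+1 i)%:~R) / ((m.+1)`!)%:R :> rat.
Proof.
move=> hi.
have H := congr1 (fun z : int => (z%:~R : rat) / ((m.+1)`!)%:R) (L2int m i hi).
rewrite /= rmorphMn rmorph_sum /= mulr_suml in H.
rewrite mulr_natl H; apply: eq_bigr => j _.
have hj : (j <= m)%N by rewrite -ltnS.
have key : ((m.+1)`!)%:R = ('C(m.+1,j.+1))%:R * (j.+1)%:R * (j`!)%:R * ((m-j)`!)%:R :> rat.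
  rewrite -!natrM; congr _%:R.
  rewrite -(bin_fact (n:=m.+1) (m:=j.+1)) // subSS factS.
  by rewrite !mulnA.
have h1 : (j.+1)%:R != 0 :> rat by rewrite pnatr_eq0.
have h2 : (j`!)%:R != 0 :> rat by rewrite pnatr_eq0 -lt0n fact_gt0.
have h3 : ((m-j)`!)%:R != 0 :> rat by rewrite pnatr_eq0 -lt0n fact_gt0.
have h4 : ('C(m.+1,j.+1))%:R != 0 :> rat by rewrite pnatr_eq0 -lt0n bin_gt0.
rewrite key /cc !intrM intr_sign !rmorph_nat.
field.
by rewrite h2 h3 h4 addrC natr1 h1.
Qed.

Definition bb n := (Defs.bseq n)`_n.
Definition ll j : rat := (-1)^+j / (j.+1)%:R.
Definition conv (x : nat -> rat) m := \sum_(j < m.+1) ll j * x (m - j)%N.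

Lemma size_dbseq n : size (Defs.bseq n) = n.+1.
Proof. by elim: n => [|n IH] //=; rewrite size_rcons IH. Qed.

Lemma dbseqS m : Defs.bseq m.+1 = rcons (Defs.bseq m)
   (- \sum_(j < m.+1) (Defs.bseq m)`_j * (-1) ^+ (m.+1 - j) / (m.+2 - j)%:R).
Proof. by []. Qed.

Lemma bseq_stable n j : (j <= n)%N -> (Defs.bseq n)`_j = bb j.
Proof.
elim: n => [|n IH] hj; first by case: j hj.
case: (eqVneq j n.+1) => [->//|hne].
have hjn : (j <= n)%N by rewrite -ltnS ltn_neqAle hne.
by rewrite dbseqS nth_rcons size_dbseq ltnS hjn IH.
Qed.

Lemma bb_rec N : \sum_(j < N.+1) bb j * (-1)^+(N - j) / ((N - j).+1)%:R = (N == 0)%:R.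
Proof.
case: N => [|M]; first by rewrite big_ord1 /bb /= subnn expr0 !mulr1.
rewrite big_ord_recr /= subnn expr0 !mulr1.
rewrite [bb M.+1]/bb dbseqS nth_rcons size_dbseq ltnn eqxx.
rewrite -sumrB big1 // => j _.
have hj : (j <= M)%N by rewrite -ltnS.
have e : (M.+2 - j = (M - j).+2)%N by rewrite !subSn // leqW.
by rewrite (bseq_stable _ _ hj) (subSn hj) e subrr.
Qed.

Lemma conv_bb N : conv bb N = (N == 0)%:R.
Proof.
rewrite /conv -bb_rec (reindex_inj rev_ord_inj) /=.
apply: eq_bigr => j _.
rewrite subSS (subKn (_ : (j <= N)%N)); last by rewrite -ltnS.
rewrite /ll mulrC mulrA.
by [].
Qed.

Lemma conv_inj x y : (forall m, conv x m = conv y m) -> forall m, x m = y m.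
Proof.
move=> h m; elim/ltn_ind: m => m IH.
have lt : forall j : 'I_m, (m - bump 0 j < m)%N.
  move=> j; rewrite bump0n subnS prednK ?leq_subr //.
  by rewrite subn_gt0 ltn_ord.
have := h m; rewrite /conv !big_ord_recl subn0.
under eq_bigr => j _ do rewrite (IH _ (lt j)).
rewrite /ll expr0 divr1 !mul1r.
by move/addIr.
Qed.

Lemma sum_trunc (F : nat -> rat) n M : (n <= M)%N ->
  (forall i, (n <= i)%N -> (i < M)%N -> F i = 0) -> \sum_(i<M) F i = \sum_(i<n) F i.
Proof.
move=> hnM hF.
rewrite -!(big_mkord xpredT) (@big_cat_nat _ _ _ n 0 M) //=.
have -> : \sum_(n <= i < M) F i = 0.
  by rewrite big_nat_cond big1 // => i /andP[/andP[hi hi'] _]; exact: hF.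
by rewrite addr0.
Qed.

From mathcomp Require Import zify.

Definition aa K m : rat := (m`!%:R)^-1 *
  \sum_(i < m.+2) (stir1 m i.-1)%:~R * (stir2 i K)%:R / i%:R.
Definition cseq K m : rat := if (K.-1 <= m)%N then bb (m - K.-1) / (K`!)%:R else 0.

Lemma aa_ext K m M : (m.+2 <= M)%N -> aa K m = (m`!%:R)^-1 *
  \sum_(i < M) (stir1 m i.-1)%:~R * (stir2 i K)%:R / i%:R.
Proof.
move=> h; rewrite /aa; congr (_ * _); symmetry.
apply: (sum_trunc (fun i => (stir1 m i.-1)%:~R * (stir2 i K)%:R / i%:R)) => // i hi _.
case: i hi => // i hi.
by rewrite /= stir1_big ?mul0r.
Qed.

Lemma conv_aa K m : (0 < K)%N -> conv (aa K) m = (m == K.-1)%:R / (K`!)%:R.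
Proof.
move=> hK; rewrite /conv.
have hle : forall j : 'I_m.+1, ((m - j).+2 <= m.+2)%N.
  by move=> j; rewrite !ltnS leq_subr.
under eq_bigr => j _ do rewrite (aa_ext K (m - j) _ (hle j)) mulrA mulr_sumr.
rewrite exchange_big /=.
have inner : forall i : 'I_m.+2,
  \sum_(j < m.+1) ll j * ((m - j)`!%:R)^-1 * ((stir1 (m - j) i.-1)%:~R * (stir2 i K)%:R / i%:R)
  = (stir1 m.+1 i)%:~R * (stir2 i K)%:R / ((m.+1)`!)%:R.
  move=> i; case: (posnP i) => [i0|ipos].
    have S0 : stir2 0 K = 0%N by case: K hK.
    rewrite i0 S0 !mulr0 ?mul0r big1 // => j _.
    by rewrite !mulr0.
  transitivity ((stir2 i K)%:R / (i%:R : rat) * \sum_(j < m.+1) ((-1)^+j / (j.+1)%:R) *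
     ((stir1 (m - j) i.-1)%:~R / ((m-j)`!)%:R)).
    rewrite mulr_sumr; apply: eq_bigr => j _; rewrite /ll; ring.
  rewrite L2q //.
  have h1 : (i%:R : rat) != 0 by rewrite pnatr_eq0 -lt0n.
  have h2 : ((m.+1)`!%:R : rat) != 0 by rewrite pnatr_eq0 -lt0n fact_gt0.
  by field; rewrite h1 h2.
rewrite (eq_bigr _ (fun i _ => inner i)) -mulr_suml orth //.
have -> : (m == K.-1) = (m.+1 == K) by rewrite -eqSS prednK.
by case: (eqVneq m.+1 K) => [<-|ne]; rewrite ?mul0r.
Qed.

Lemma conv_c K m : (0 < K)%N -> conv (cseq K) m = (m == K.-1)%:R / (K`!)%:R.
Proof.
case: K => // K _; rewrite /conv /=.
case: (leqP K m) => hm; last first.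
  rewrite ltn_eqF // mul0r big1 // => j _.
  rewrite /cseq /= ifF ?mulr0 //.
  by apply/negbTE; rewrite -ltnNge; lia.
set N := (m - K)%N.
rewrite (@sum_trunc (fun j => ll j * cseq K.+1 (m - j)%N) N.+1); last first.
    move=> j hj hjm; rewrite /cseq /= ifF ?mulr0 //.
    by apply/negbTE; rewrite -ltnNge; lia.
  by rewrite /N; lia.
have -> : (m == K) = (N == 0)%N by apply/eqP/eqP; rewrite /N; lia.
rewrite -conv_bb /conv mulr_suml; apply: eq_bigr => j _.
rewrite /cseq /= ifT; last by have := ltn_ord j; rewrite /N; lia.
rewrite mulrA; congr (_ * bb _ / _).
by have := ltn_ord j; rewrite /N; lia.
Qed.

Theorem theorem4 (n k : nat) (hk : (1 <= k)%N) (hkn : (k <= n)%N) :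
  \sum_(k <= i < n.+1)
     ((stir1 (n.-1) (i.-1))%:~R * (stir2 i k)%:R / (i%:R : rat))
  = (n%:R)^-1 * ('C(n, k))%:R * bstar (n - k).
Proof.
case: n hkn => [|m] hkn; first by case: k hk hkn.
have hac := @conv_inj (aa k) (cseq k)
  (fun m => etrans (conv_aa k m hk) (esym (conv_c k m hk))) m.
have hkm : (k.-1 <= m)%N by move: hk hkn; case: k {hac} => // k _; rewrite ltnS.
have E1 : \sum_(k <= i < m.+2)
     ((stir1 (m.+1.-1) (i.-1))%:~R * (stir2 i k)%:R / (i%:R : rat))
   = (m`!)%:R * aa k m.
  rewrite /aa mulrA mulfV ?mul1r; last by rewrite pnatr_eq0 -lt0n fact_gt0.
  rewrite -(big_mkord xpredT (fun i => (stir1 m i.-1)%:~R * (stir2 i k)%:R / (i%:R : rat))).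
  rewrite (@big_cat_nat _ _ _ k 0 m.+2 _ _ (leq0n k) (leqW hkn)) /=.
  rewrite [X in _ = X + _]big_nat_cond [X in _ = X + _]big1 ?add0r // => i /andP[/andP[_ hi] _].
  by rewrite stir2_small // mulr0 mul0r.
rewrite E1 hac /cseq hkm /bstar -/(bb _).
have eN : (m - k.-1 = m.+1 - k)%N by move: hk hkn; case: k {hac hkm E1} => // k _ _ /=; rewrite subSS.
rewrite eN.
set N := (m.+1 - k)%N.
have hb := bin_fact hkn.
have key : ((m.+1)`!%:R : rat) = ('C(m.+1, k))%:R * (k`!)%:R * (N`!)%:R.
  by rewrite -!natrM -mulnA hb.
have h1 : ((m.+1)%:R : rat) != 0 by rewrite pnatr_eq0.
have h2 : ((k`!)%:R : rat) != 0 by rewrite pnatr_eq0 -lt0n fact_gt0.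
have h3 : ((N`!)%:R : rat) != 0 by rewrite pnatr_eq0 -lt0n fact_gt0.
have h4 : ((m`!)%:R : rat) != 0 by rewrite pnatr_eq0 -lt0n fact_gt0.
have key2 : (('C(m.+1, k))%:R : rat) = (m.+1)%:R * (m`!)%:R / ((k`!)%:R * (N`!)%:R).
  rewrite -natrM -factS key; field; by rewrite h2 h3.
rewrite key2.
field; by rewrite h2 h3 addrC natr1 h1.
Qed.
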